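(* Consider the slotted content-push system described in the context, operated under a threshold-based policy with integer threshold $C_{\mathrm{thr}}$, $1\le C_{\mathrm{thr}}\le N$: in every slot $k$ with $C_k<C_{\mathrm{thr}}$ the SBS takes the push action $u_k=2$. Assume that the energy $E_p$ required for a push is always available. Then, in the stationary regime, the probability that the SBS pushes a content in a slot is $$\Pr(u_k=2)=\frac{p_c\,C_{\mathrm{thr}}}{N+p_c}.$$
   Context: Time is slotted, $k=1,2,\dots$. There are $N$ contents of interest, ranked $c_1,\dots,c_N$. The content at rank $i$ has popularity (Zipf) $f_i=\frac{i^{-v}}{\sum_{j=1}^N j^{-v}}$ with skew $v\ge 0$. In each slot, with probability $p_c\in(0,1]$, one content is selected uniformly at random (probability $1/N$ each) and removed; the contents ranked below it move up one rank, and a new content enters at rank $N$. Users store the pushed contents, which are always the $C_k$ most popular ones $c_1,\dots,c_{C_k}$, where $C_k\in\{0,\dots,N\}$ is the push state. In each slot the SBS takes an action $u_k\in\{0,1,2\}$ (sleep, unicast, push). A push transmits content $c_{C_k+1}$ to all users at energy cost $E_p$. The push state evolves as follows. If $u_k\in\{0,1\}$: $C_{k+1}=C_k-1$ with probability $p_cC_k/N$, and $C_{k+1}=C_k$ otherwise. If $u_k=2$ (only allowed when $C_k<N$): $C_{k+1}=C_k$ with probability $p_cC_k/N$, and $C_{k+1}=C_k+1$ otherwise. *)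

(* Defs.v *)
From HB Require Import structures.
From mathcomp Require Import all_boot all_order all_algebra.
Set Implicit Arguments. Unset Strict Implicit. Unset Printing Implicit Defensive.
Import Order.TTheory GRing.Theory Num.Theory.
Local Open Scope ring_scope.

(* Push-state Markov chain on states C in {0,...,N} (type 'I_N.+1),
   under a stationary (state-feedback) policy u : state -> action,
   actions 0 = sleep, 1 = unicast, 2 = push.
   trans u i j = Pr(C_{k+1} = j | C_k = i, u_k = u i). *)
Definition trans (R : realFieldType) (N : nat) (pc : R)
  (u : 'I_N.+1 -> nat) (i j : 'I_N.+1) : R :=
  let q := pc * (nat_of_ord i)%:R / N%:R in
  if u i == 2%N then
    (if nat_of_ord j == nat_of_ord i then q
     else if nat_of_ord j == (nat_of_ord i).+1 then 1 - q else 0)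
  else
    (if (nat_of_ord j).+1 == nat_of_ord i then q
     else if nat_of_ord j == nat_of_ord i then 1 - q else 0).

Definition stationary (R : realFieldType) (N : nat) (pc : R)
  (u : 'I_N.+1 -> nat) (pi : 'I_N.+1 -> R) : Prop :=
  (forall i, 0 <= pi i) /\ (\sum_i pi i = 1) /\
  (forall j, \sum_i pi i * trans pc u i j = pi j).

Definition push_prob (R : realFieldType) (N : nat)
  (u : 'I_N.+1 -> nat) (pi : 'I_N.+1 -> R) : R :=
  \sum_(i | u i == 2%N) pi i.

(* Main.v *)
Require Import Defs.
From HB Require Import structures.
From mathcomp Require Import all_boot all_order all_algebra.
From mathcomp Require Import zify ring lra.
Require Import Defs.
Set Implicit Arguments. Unset Strict Implicit.
Import Order.TTheory GRing.Theory Num.Theory.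
Local Open Scope ring_scope.

Lemma sum_pick (R : realFieldType) (N k : nat) (F : nat -> R) :
  \sum_(i < N.+1) (if (i:nat) == k then F i else 0) = if (k < N.+1)%N then F k else 0.
Proof.
case: ltnP => hk.
  rewrite (bigD1 (Ordinal hk)) //= eqxx big1 ?addr0 // => i hi.
  rewrite ifF //; apply/negbTE; apply: contra hi => /eqP h.
  by apply/eqP; apply: val_inj.
rewrite big1 // => i _; rewrite ifF //; apply/negbTE.
have := ltn_ord i; lia.
Qed.

Definition qf (R : realFieldType) (N : nat) (pc : R) (n : nat) : R := pc * n%:R / N%:R.
Definition Pn (R : realFieldType) (N : nat) (pi : 'I_N.+1 -> R) (n : nat) : R :=
  if (n < N.+1)%N then pi (inord n) else 0.

Lemma PnE (R : realFieldType) (N : nat) (pi : 'I_N.+1 -> R) (i : 'I_N.+1) :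
  Pn pi i = pi i.
Proof. by rewrite /Pn ltn_ord; congr pi; apply: val_inj; rewrite /= inordK. Qed.

Lemma trans_pt (R : realFieldType) (N C : nat) (pc : R) (u : 'I_N.+1 -> nat)
  (hu_thr : forall i, (u i == 2%N) = (nat_of_ord i < C)%N) (i j : 'I_N.+1) :
  trans pc u i j =
   (if (i:nat) == j then (if (i < C)%N then qf N pc i else 1 - qf N pc i) else 0)
 + (if (i:nat) == j.+1 then (if (i < C)%N then 0 else qf N pc i) else 0)
 + (if (i:nat) == (j:nat).-1 then (if (0 < j)%N && (i < C)%N then 1 - qf N pc i else 0) else 0).
Proof.
rewrite /trans hu_thr -/(qf N pc i).
move: (i:nat) (j:nat) => a b.
case: (ltnP a C) => hc /=;
  repeat (case: eqP => ? /=); case: (ltnP 0 b) => ? /=;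
  rewrite ?andbT ?andbF /= ?addr0 ?add0r //; lia.
Qed.


Lemma inc_eq (R : realFieldType) (N C : nat) (pc : R) (u : 'I_N.+1 -> nat)
  (hu_thr : forall i, (u i == 2%N) = (nat_of_ord i < C)%N)
  (pi : 'I_N.+1 -> R) (j : 'I_N.+1) :
  \sum_i pi i * trans pc u i j =
   (if (j < C)%N then qf N pc j else 1 - qf N pc j) * Pn pi j
 + (if (j.+1 < N.+1)%N then (if (j.+1 < C)%N then 0 else qf N pc j.+1) * Pn pi j.+1 else 0)
 + (if (0 < j)%N && (j.-1 < C)%N then 1 - qf N pc j.-1 else 0) * Pn pi j.-1.
Proof.
under eq_bigr => i _ do rewrite (trans_pt pc hu_thr) -PnE !mulrDr.
rewrite !big_split /=.
have hj : ((j:nat).-1 < N.+1)%N by have := ltn_ord j; lia.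
pose F1 := fun n => (if (n < C)%N then qf N pc n else 1 - qf N pc n) * Pn pi n.
pose F2 := fun n => (if (n < C)%N then 0 else qf N pc n) * Pn pi n.
pose F3 := fun n => (if (0 < j)%N && (n < C)%N then 1 - qf N pc n else 0) * Pn pi n.
transitivity (\sum_(i < N.+1) (if (i:nat) == j then F1 i else 0)
  + \sum_(i < N.+1) (if (i:nat) == j.+1 then F2 i else 0)
  + \sum_(i < N.+1) (if (i:nat) == (j:nat).-1 then F3 i else 0)).
  congr (_ + _ + _); apply: eq_bigr => i _; rewrite /F1 /F2 /F3.
  - by case: eqP => [->|]; rewrite ?mulr0 // mulrC.
  - by case: eqP => [->|]; rewrite ?mulr0 // mulrC.
  - by case: eqP => [->|]; rewrite ?mulr0 // mulrC.
by rewrite !sum_pick ltn_ord hj.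
Qed.

Lemma Eq_at (R : realFieldType) (N C : nat) (pc : R) (u : 'I_N.+1 -> nat)
  (hu_thr : forall i, (u i == 2%N) = (nat_of_ord i < C)%N)
  (pi : 'I_N.+1 -> R) (j : nat) (hj : (j < N.+1)%N)
  (hs : \sum_i pi i * trans pc u i (inord j) = pi (inord j)) :
  Pn pi j =
   (if (j < C)%N then qf N pc j else 1 - qf N pc j) * Pn pi j
 + (if (j.+1 < N.+1)%N then (if (j.+1 < C)%N then 0 else qf N pc j.+1) * Pn pi j.+1 else 0)
 + (if (0 < j)%N && (j.-1 < C)%N then 1 - qf N pc j.-1 else 0) * Pn pi j.-1.
Proof.
by rewrite {1}/Pn hj -hs (inc_eq pc hu_thr) inordK.
Qed.

Lemma PnF (R : realFieldType) (N : nat) (f : nat -> R) (n : nat) :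
  Pn (fun i : 'I_N.+1 => f i) n = if (n < N.+1)%N then f n else 0.
Proof. by rewrite /Pn; case: ifP => // h; rewrite inordK. Qed.


Lemma qf_lt1 (R : realFieldType) (N : nat) (pc : R) n :
  0 < pc -> pc <= 1 -> (n < N)%N -> qf N pc n < 1.
Proof.
move=> h0 h1 hn; rewrite /qf ltr_pdivrMr ?ltr0n; last by lia.
rewrite mul1r; apply: (le_lt_trans (y := n%:R)).
  by rewrite -[leRHS]mul1r ler_wpM2r.
by rewrite ltr_nat.
Qed.

Lemma qf_gt0 (R : realFieldType) (N : nat) (pc : R) n :
  0 < pc -> (0 < n)%N -> (0 < N)%N -> 0 < qf N pc n.
Proof. by move=> h0 hn hN; rewrite /qf divr_gt0 ?mulr_gt0 ?ltr0n. Qed.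

Theorem lemma1 (R : realFieldType) (N Cthr : nat) (pc : R)
  (hpc0 : 0 < pc) (hpc1 : pc <= 1)
  (hthr1 : (1 <= Cthr)%N) (hthrN : (Cthr <= N)%N)
  (u : 'I_N.+1 -> nat)
  (hu_act : forall i, (u i <= 2)%N)
  (hu_thr : forall i, (u i == 2%N) = (nat_of_ord i < Cthr)%N) :
  (exists pi, stationary pc u pi) /\
  (forall pi, stationary pc u pi ->
     push_prob u pi = pc * Cthr%:R / (N%:R + pc)).
Proof.
have hN0 : (0 < N)%N by lia.
have hNR : N%:R != 0 :> R by rewrite pnatr_eq0 -lt0n.
have hNp : N%:R + pc != 0 by rewrite gt_eqF // ltr_wpDl.
set x := pc * Cthr%:R / (N%:R + pc).
have key : forall y : R, y = qf N pc Cthr.-1 * y + qf N pc Cthr * (1 - y) -> y = x.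
  move=> y; rewrite /qf /x.
  have -> : Cthr%:R = Cthr.-1%:R + 1 :> R by rewrite natr1 prednK.
  move=> h; apply: (mulIf hNp); rewrite divfK //.
  set c := Cthr.-1%:R in h *; set n := N%:R in hNR hNp h *.
  have h2 : y * n = pc * c * y + pc * (c + 1) * (1 - y).
    by rewrite {1}h; field.
  lra.
have hS : Cthr.-1.+1 = Cthr by rewrite prednK.
split.
  have keyr : x = qf N pc Cthr.-1 * x + qf N pc Cthr * (1 - x).
    rewrite /x /qf.
    have -> : Cthr.-1%:R = Cthr%:R - 1 :> R by rewrite -[in RHS](prednK hthr1) -natr1 addrK.
    by field; rewrite hNp hNR.
  have x0 : 0 <= x by rewrite /x divr_ge0 ?mulr_ge0 ?ler0n ?addr_ge0 // ltW.
  have x1 : x <= 1.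
    rewrite /x ler_pdivrMr ?mul1r; last by rewrite ltr_wpDl.
    apply: (le_trans (y := Cthr%:R)).
      by rewrite -[leRHS]mul1r ler_wpM2r.
    by rewrite (le_trans (y := N%:R)) ?ler_nat // lerDl ltW.
  clearbody x.
  pose f := fun n : nat => if n == Cthr.-1 then x else if n == Cthr then 1 - x else 0.
  exists (fun i : 'I_N.+1 => f (nat_of_ord i)); split; [|split].
  - move=> i; rewrite /f; case: ifP => _ //; case: ifP => _ //; lra.
  - have ha : (Cthr.-1 < N.+1)%N by lia.
    have hc : (Cthr < N.+1)%N by lia.
    rewrite (bigD1 (Ordinal ha)) //= (bigD1 (Ordinal hc)) /=; last first.
      by apply/eqP => /(congr1 val) /=; lia.
    rewrite big1 ?addr0; last first.
      move=> i /andP [h1 h2]; rewrite /f.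
      have n1 : ((i:nat) == Cthr.-1) = false.
        by apply/negbTE; apply: contra h1 => /eqP h; apply/eqP/val_inj.
      have n2 : ((i:nat) == Cthr) = false.
        by apply/negbTE; apply: contra h2 => /eqP h; apply/eqP/val_inj.
      by rewrite n1 n2.
    have e4 : (Cthr == Cthr.-1) = false by lia.
    rewrite /f eqxx e4 eqxx; ring.
  move=> j; rewrite (inc_eq pc hu_thr) !PnF.
  have := ltn_ord j; move: (nat_of_ord j) => n hn.
  rewrite /f.
  have [->|na] := eqVneq n Cthr.-1; [|have [->|nc] := eqVneq n Cthr].
  - have e1 : (Cthr.-1 < Cthr)%N by lia.
    have e2 : (Cthr.-1 < N.+1)%N by lia.
    have e3 : (Cthr < N.+1)%N by lia.
    have e4 : (Cthr == Cthr.-1) = false by lia.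
    rewrite e1 e2 hS e3 ltnn e4 eqxx.
    have -> : (if (0 < Cthr.-1)%N && (Cthr.-2 < Cthr)%N then 1 - qf N pc Cthr.-2 else 0) *
      (if (Cthr.-2 < N.+1)%N then if Cthr.-2 == Cthr.-1 then x else if Cthr.-2 == Cthr then 1 - x else 0
       else 0) = 0.
      case: ifP => h; last by rewrite mul0r.
      have e5 : (Cthr.-2 == Cthr.-1) = false by lia.
      have e6 : (Cthr.-2 == Cthr) = false by lia.
      by rewrite e5 e6 !if_same mulr0.
    by rewrite addr0 {3}keyr.
  - have e1 : (Cthr.-1 < N.+1)%N by lia.
    have e3 : (Cthr < N.+1)%N by lia.
    have e4 : (Cthr == Cthr.-1) = false by lia.
    have e5 : (0 < Cthr)%N && (Cthr.-1 < Cthr)%N by apply/andP; split; lia.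
    rewrite ltnn e5 e1 eqxx e3.
    set t2 := (if (Cthr.+1 < N.+1)%N then _ else _).
    have -> : t2 = 0.
      rewrite /t2; case: ifP => // _.
      have e6 : (Cthr.+1 == Cthr.-1) = false by lia.
      have e7 : (Cthr.+1 == Cthr) = false by lia.
      by rewrite e6 e7 !if_same mulr0.
    rewrite addr0; apply/eqP; rewrite -subr_eq0; apply/eqP.
    transitivity (x - (qf N pc Cthr.-1 * x + qf N pc Cthr * (1 - x))); first ring.
    by rewrite -keyr subrr.
  - rewrite if_same mulr0 add0r.
    set t2 := (if (n.+1 < N.+1)%N then _ else _).
    have -> : t2 = 0.
      rewrite /t2; case: ifP => // _.
      case: (eqVneq n.+1 Cthr.-1) => [h|h].
        by rewrite (_ : (n.+1 < Cthr)%N) ?mul0r //; lia.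
      have e8 : (n.+1 == Cthr) = false by lia.
      by rewrite e8 /= if_same mulr0.
    rewrite add0r.
    case: ifP => h; last by rewrite mul0r.
    have e6 : (n.-1 == Cthr.-1) = false by lia.
    have e7 : (n.-1 == Cthr) = false by lia.
    by rewrite e6 e7 !if_same mulr0.
move=> pi [hpos [hsum hst]].
have E : forall j, (j < N.+1)%N -> _ := fun j hj => Eq_at hu_thr hj (hst (inord j)).
have low : forall j, (j.+1 < Cthr)%N -> Pn pi j = 0.
  elim=> [|j IH] hj.
    have := E 0%N isT; rewrite /= hj (_ : (0 < Cthr)%N) //= !mul0r if_same !addr0 => h.
    by move: h; rewrite /qf mulr0 !mul0r.
  have := E j.+1 ltac:(lia); rewrite /= IH; last by lia.
  rewrite hj (_ : (j.+1 < Cthr)%N); last by lia.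
  rewrite mul0r if_same mulr0 !addr0 => h.
  have hq := @qf_lt1 R N pc j.+1 hpc0 hpc1 ltac:(lia).
  have : (1 - qf N pc j.+1) * Pn pi j.+1 = 0 by lra.
  by move/eqP; rewrite mulf_eq0 subr_eq0 gt_eqF //= => /eqP.
have high : forall m j, (N - j <= m)%N -> (Cthr < j)%N -> (j <= N)%N -> Pn pi j = 0.
  { move=> m; elim: m => [|m IH] j hm hc hjN.
  all: have hjN' : (j < N.+1)%N by lia.
  all: have := E j hjN'.
  all: have f1 : (j < Cthr)%N = false by lia.
  all: have f3 : ((0 < j)%N && (j.-1 < Cthr)%N) = false by lia.
  all: rewrite f1 f3 mul0r addr0.
  all: have hj0 : (0 < j)%N by lia.
  all: have hq := @qf_gt0 R N pc j hpc0 hj0 hN0.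
    have f2 : (j.+1 < N.+1)%N = false by lia.
    rewrite f2 addr0 => h.
    have : qf N pc j * Pn pi j = 0 by lra.
    by move/eqP; rewrite mulf_eq0 gt_eqF //= => /eqP.
  have t2 : (if (j.+1 < N.+1)%N then (if (j.+1 < Cthr)%N then 0 else qf N pc j.+1) * Pn pi j.+1 else 0) = 0.
    by case: ifP => hh //; rewrite (IH j.+1) ?mulr0 //; lia.
  rewrite t2 addr0 => h.
  have : qf N pc j * Pn pi j = 0 by lra.
  by move/eqP; rewrite mulf_eq0 gt_eqF //= => /eqP. }
have zero : forall n, (n < N.+1)%N -> n != Cthr.-1 -> n != Cthr -> Pn pi n = 0.
  move=> n hn h1 h2; case: (ltnP n Cthr) => hh.
    by apply: low; lia.
  apply: (high (N - n)%N n); lia.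
have Ea : Pn pi Cthr.-1 = qf N pc Cthr.-1 * Pn pi Cthr.-1 + qf N pc Cthr * Pn pi Cthr.
  have := E Cthr.-1 ltac:(lia); rewrite hS ltnn leqnn (_ : (Cthr < N.+1)%N); last by lia.
  have -> : (if (0 < Cthr.-1)%N && (Cthr.-2 < Cthr)%N then 1 - qf N pc Cthr.-2 else 0)
     * Pn pi Cthr.-2 = 0.
    case: ifP => hh; last by rewrite mul0r.
    by rewrite low ?mulr0 //; lia.
  by rewrite addr0.
have Sum : Pn pi Cthr.-1 + Pn pi Cthr = 1.
  rewrite -hsum (bigD1 (inord Cthr.-1)) //= (bigD1 (inord Cthr)) /=; last first.
    by apply/eqP => /(congr1 val) /=; rewrite !inordK; lia.
  rewrite big1 ?addr0; last first.
    move=> i /andP [h1 h2]; rewrite -PnE zero //.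
    - by apply: contra h1 => /eqP h; apply/eqP/val_inj; rewrite /= inordK; lia.
    - by apply: contra h2 => /eqP h; apply/eqP/val_inj; rewrite /= inordK; lia.
  have h1 : (Cthr.-1 < N.+1)%N by lia.
  have h2 : (Cthr < N.+1)%N by lia.
  by rewrite /Pn h1 h2.
have Push : push_prob u pi = Pn pi Cthr.-1.
  rewrite /push_prob (bigD1 (inord Cthr.-1)); last by rewrite hu_thr inordK; lia.
  have hA : (Cthr.-1 < N.+1)%N by lia.
  rewrite big1 /=; first by rewrite addr0 /Pn hA.
  move=> i /andP [hi h2]; rewrite hu_thr in hi; rewrite -PnE low //.
  suff : (i:nat) != Cthr.-1 by lia.
  by apply: contra h2 => /eqP h; apply/eqP/val_inj; rewrite /= inordK; lia.
rewrite Push; apply: key.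
have hPC : Pn pi Cthr = 1 - Pn pi Cthr.-1 by rewrite -Sum; ring.
by rewrite {1}Ea hPC.
Qed.
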